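(* Let $G=\bigl((f_j)_{j=1}^n;(\mu^{R})_{\emptyset\ne R\subseteq[n]}\bigr)$ be an $n$-resource selection game with $f_1,\ldots,f_n$ continuous. (a) There exists a consumption profile $s$ in the $|P_G|$-resource selection game $\bigl((f_j)_{j\in P_G};(\mu^R)_{\emptyset\ne R\subseteq P_G}\bigr)$ such that $h^s_j=h_G$ for every $j\in P_G$. (b) If $P_G\ne[n]$, then $h_G>h_{G-P_G}$.
   Context: An $n$-resource selection game is $G=\bigl((f_j)_{j=1}^n;(\mu^{R})_{\emptyset\ne R\subseteq[n]}\bigr)$ with each $f_j:[0,\infty)\to\mathbb{R}$ nondecreasing and each $\mu^R\ge0$ (a game on a resource set $S$ is defined analogously with $S$ in place of $[n]$). A consumption profile assigns to each nonempty $R$ a vector $s(R)\ge0$ supported on $R$ with total $\mu^R$; loads $\mu^s_j=\sum_R s_j(R)$, costs $h^s_j=f_j(\mu^s_j)$. Equalization: for nondecreasing $g_1,\ldots,g_m:[0,\infty)\to\mathbb{R}\cup\{\mathrm{undefined}\}$, $\mathrm{eq}(g_1,\ldots,g_m)(\mu)=g_1(\mu_1)$ if there exist $\mu_1,\ldots,\mu_m\ge0$ summing to $\mu$ with $g_1(\mu_1)=\cdots=g_m(\mu_m)\in\mathbb{R}$, else $\mathrm{undefined}$. For nonempty $S\subseteq[n]$: $E_G(S)=\mathrm{eq}(f_k:k\in S)\bigl(\sum_{\emptyset\ne R\subseteq S}\mu^R\bigr)$; $M_G(S)$ is the set of nonempty $S'\subseteq S$ such that for every $0\le\mu\le\sum_{R\subseteq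 S,\,R\cap S'\ne\emptyset}\mu^R$, $\mathrm{eq}(f_k:k\in S')(\mu)\ne E_G(S)$ ($\mathrm{undefined}$ differs from every real); $D_G=\{S: E_G(S)\in\mathbb{R},\ M_G(S)=\emptyset\}$; $h_G=\max_{S\in D_G}E_G(S)$; $P_G=\bigcup\{S\in D_G:E_G(S)=h_G\}$. Resource removal: for $S\subsetneq[n]$, $G-S$ is the game with resources $[n]\setminus S$, cost functions $(f_j)_{j\notin S}$, and mass $\sum_{R:\,R\setminus S=R'}\mu^R$ for each nonempty $R'\subseteq[n]\setminus S$. *)

(* Defs.v *)
From HB Require Import structures.
From mathcomp Require Import all_boot.
From Stdlib Require Import Reals.

Set Implicit Arguments.
Unset Strict Implicit.
Unset Printing Implicit Defensive.

Local Open Scope R_scope.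

Lemma Rplus_assoc' : associative Rplus.
Proof. by move=> x y z; rewrite Rplus_assoc. Qed.
HB.instance Definition _ :=
  Monoid.isComLaw.Build R R0 Rplus Rplus_assoc' Rplus_comm Rplus_0_l.

Definition rsum (T : finType) (P : {pred T}) (F : T -> R) : R :=
  \big[Rplus/R0]_(i in P) F i.

(* A game on a resource
   set U ⊆ [n] uses only f_j for j in U and mu^Rs for nonempty Rs ⊆ U. *)

Definition nondecr0 (g : R -> R) : Prop :=
  forall x y, 0 <= x -> x <= y -> g x <= g y.

Definition cont0 (g : R -> R) : Prop :=
  forall x, 0 <= x -> forall eps, 0 < eps -> exists delta, 0 < delta /\
    forall y, 0 <= y -> Rabs (y - x) < delta -> Rabs (g y - g x) < eps.

Section Game.
Variable n : nat.
Variable f : 'I_n -> R -> R.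
Variable mu : {set 'I_n} -> R.

(* eq(f_k : k in S)(m) = c, for nonempty S: there are x_k >= 0 (k in S)
   summing to m with f_k(x_k) = c for all k in S.  (For nondecreasing f_k the
   common value c is unique, so this relation is the graph of eq.) *)
Definition eqz (S : {set 'I_n}) (m c : R) : Prop :=
  S != set0 /\
  exists x : 'I_n -> R,
    (forall k, k \in S -> 0 <= x k) /\
    rsum (mem S) x = m /\
    (forall k, k \in S -> f k (x k) = c).

Definition massIn (S : {set 'I_n}) : R :=
  rsum (fun Rs : {set 'I_n} => (Rs != set0) && (Rs \subset S)) mu.

Definition massMeet (S S' : {set 'I_n}) : R :=
  rsum (fun Rs : {set 'I_n} => (Rs \subset S) && (Rs :&: S' != set0)) mu.

Definition Eval (S : {set 'I_n}) (c : R) : Prop := eqz S (massIn S) c.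

Definition inM (S S' : {set 'I_n}) (c : R) : Prop :=
  S' != set0 /\ S' \subset S /\
  forall m, 0 <= m -> m <= massMeet S S' -> ~ eqz S' m c.

Definition inD (U S : {set 'I_n}) (c : R) : Prop :=
  S != set0 /\ S \subset U /\ Eval S c /\ (forall S', ~ inM S S' c).

Definition isH (U : {set 'I_n}) (h : R) : Prop :=
  (exists S, inD U S h) /\ (forall S c, inD U S c -> c <= h).

Definition isP (U : {set 'I_n}) (h : R) (P : {set 'I_n}) : Prop :=
  forall j, j \in P <-> exists S, inD U S h /\ j \in S.

Definition consProfile (U : {set 'I_n}) (s : {set 'I_n} -> 'I_n -> R) : Prop :=
  forall Rs, Rs != set0 -> Rs \subset U ->
    (forall j, 0 <= s Rs j) /\ (forall j, j \notin Rs -> s Rs j = 0) /\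
    rsum (mem Rs) (s Rs) = mu Rs.

Definition load (U : {set 'I_n}) (s : {set 'I_n} -> 'I_n -> R) (j : 'I_n) : R :=
  rsum (fun Rs : {set 'I_n} => (Rs != set0) && (Rs \subset U)) (fun Rs => s Rs j).

End Game.

(* masses of the game G - S : mu'(R') = sum of mu^Rs over nonempty Rs with Rs \ S = R' *)
Definition removeMass (n : nat) (mu : {set 'I_n} -> R) (S : {set 'I_n})
  : {set 'I_n} -> R :=
  fun R' => rsum (fun Rs : {set 'I_n} => (Rs != set0) && (Rs :\: S == R')) mu.

(* Main.v *)
Require Import Defs.
From HB Require Import structures.
From mathcomp Require Import all_boot.
From Stdlib Require Import Reals.
From Stdlib Require Import Lra Classical.
Local Open Scope R_scope.


Section Sums.
Context {T : finType}.
Implicit Types (P Q : {pred T}) (F G : T -> R).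

Lemma rsumE P F : rsum P F = \big[Rplus/R0]_(i | P i) F i.
Proof. by []. Qed.

Lemma rsum_le P F G : (forall i, P i -> F i <= G i) -> rsum P F <= rsum P G.
Proof.
move=> H; rewrite /rsum; apply: (big_ind2 Rle) => //; first lra.
  by move=> *; lra.
Qed.

Lemma rsum_ge0 P F : (forall i, P i -> 0 <= F i) -> 0 <= rsum P F.
Proof.
move=> H; rewrite /rsum; apply: (big_ind (fun x => 0 <= x)) => //; first lra.
by move=> *; lra.
Qed.

Lemma rsum_ext P Q F G : (forall i, P i = Q i) -> (forall i, Q i -> F i = G i) ->
  rsum P F = rsum Q G.
Proof.
move=> HP HF; rewrite /rsum (eq_bigl Q) //; exact: eq_bigr.
Qed.

Lemma rsum_mkcond P F : rsum P F = rsum predT (fun i => if P i then F i else 0).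
Proof. by rewrite /rsum big_mkcond. Qed.

Lemma rsum_plus P F G : rsum P (fun i => F i + G i) = rsum P F + rsum P G.
Proof. by rewrite /rsum big_split. Qed.

Lemma rsum_scale P c F : rsum P (fun i => c * F i) = c * rsum P F.
Proof.
rewrite /rsum; apply: (big_rec2 (fun x y => x = c * y)); first by ring.
by move=> i x y _ ->; ring.
Qed.

Lemma rsum_opp P F : rsum P (fun i => - F i) = - rsum P F.
Proof.
rewrite /rsum; apply: (big_rec2 (fun x y => x = - y)); first by ring.
by move=> i x y _ ->; ring.
Qed.

Lemma rsum_split P Q F : rsum P F = rsum (fun i => P i && Q i) F + rsum (fun i => P i && ~~ Q i) F.
Proof. by rewrite /rsum (bigID Q). Qed.

Lemma rsum_pick P F i0 : P i0 ->
  rsum P F = F i0 + rsum (fun i => P i && (i != i0)) F.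
Proof. by move=> Hi; rewrite /rsum (bigD1 i0). Qed.

Lemma rsum_term P F i0 : P i0 -> (forall i, P i -> 0 <= F i) -> F i0 <= rsum P F.
Proof.
move=> Hi H; rewrite (rsum_pick P F i0 Hi).
have : 0 <= rsum (fun i => P i && (i != i0)) F.
  by apply: rsum_ge0 => i /andP [] /H.
lra.
Qed.

Lemma rsum_sub P Q F : (forall i, P i -> Q i) -> (forall i, Q i -> 0 <= F i) ->
  rsum P F <= rsum Q F.
Proof.
move=> PQ H; rewrite (rsum_mkcond P F) (rsum_mkcond Q F); apply: rsum_le => i _.
case: (boolP (P i)) => Pi; first by rewrite (PQ _ Pi); lra.
by case: ifP => [/H|_]; lra.
Qed.

Lemma rsum_lt P F G i0 : P i0 -> (forall i, P i -> F i <= G i) -> F i0 < G i0 ->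
  rsum P F < rsum P G.
Proof.
move=> Hi H Hlt; rewrite (rsum_pick P F i0 Hi) (rsum_pick P G i0 Hi).
have : rsum (fun i => P i && (i != i0)) F <= rsum (fun i => P i && (i != i0)) G.
  by apply: rsum_le => i /andP [] /H.
lra.
Qed.

Lemma rsum_pred0 P F : (forall i, ~~ P i) -> rsum P F = 0.
Proof. move=> H; rewrite /rsum big_pred0; first reflexivity. by move=> i; exact: negbTE (H i). Qed.

Lemma rsum_eq0 P F : (forall i, P i -> F i = 0) -> rsum P F = 0.
Proof.
move=> H; rewrite /rsum; apply: (big_ind (fun x => x = 0)).
- by [].
- by move=> x y -> ->; rewrite Rplus_0_r.
- exact: H.
Qed.

Lemma rsum_pred1 F i0 : rsum (fun i => i == i0) F = F i0.
Proof. by rewrite /rsum big_pred1_eq. Qed.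

End Sums.


Section Flow.
Variable n : nat.
Notation S := {set 'I_n}.

Lemma memE (A : S) x : mem A x = (x \in A).
Proof. by []. Qed.

Definition lsum (l : 'I_n -> R) (T : S) := rsum (mem T) l.

Lemma lsumE l T : lsum l T = rsum predT (fun j => if j \in T then l j else 0).
Proof. by rewrite /lsum rsum_mkcond. Qed.

Lemma meetsP (A T : S) : reflect (exists x, x \in A /\ x \in T) (A :&: T != set0).
Proof.
apply: (iffP (set0Pn _)) => [[x]|[x [Ha Hb]]]; last by exists x; rewrite inE Ha Hb.
by rewrite inE => /andP [Ha Hb]; exists x.
Qed.

Lemma rsum_gap (I : finType) (F G : I -> R) i0 d :
  (forall i, G i <= F i) -> G i0 + d <= F i0 -> rsum predT G + d <= rsum predT F.
Proof.
move=> H H0; rewrite (rsum_pick predT G i0) // (rsum_pick predT F i0) //.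
have : rsum (fun i => predT i && (i != i0)) G <= rsum (fun i => predT i && (i != i0)) F.
  by apply: rsum_le => i _; apply: H.
lra.
Qed.

Lemma lsum_incl l T1 T2 : lsum l T1 + lsum l T2 = lsum l (T1 :|: T2) + lsum l (T1 :&: T2).
Proof.
rewrite !lsumE -!rsum_plus; apply: rsum_ext => // j _; rewrite !inE.
by case: (j \in T1); case: (j \in T2) => /=; ring.
Qed.

Lemma lsum_ind l k d T :
  lsum (fun j => l j + (if j == k then d else 0)) T = lsum l T + (if k \in T then d else 0).
Proof.
rewrite /lsum rsum_plus; congr (_ + _).
rewrite rsum_mkcond (rsum_pick _ _ k) // rsum_eq0; last first.
  by move=> i /andP [_ /negbTE ->]; case: ifP.
by rewrite eqxx; case: ifP => _; ring.
Qed.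

Section Ineqs.
Variable I : finType.
Variables (N : I -> S) (a : I -> R).
Hypothesis a_ge0 : forall i, 0 <= a i.

Definition cov (T : S) := rsum (fun i => N i :&: T != set0) a.
Definition inn (T : S) := rsum (fun i => N i \subset T) a.

Lemma submod i0 (T1 T2 : S) : N i0 :&: T1 != set0 -> N i0 :&: T2 != set0 ->
  N i0 :&: (T1 :&: T2) == set0 ->
  cov (T1 :|: T2) + cov (T1 :&: T2) + a i0 <= cov T1 + cov T2.
Proof.
move=> H1 H2 H3; rewrite /cov !(rsum_mkcond _ a) -!rsum_plus.
apply: (rsum_gap _ _ _ i0) => [i|].
  have Hu : (N i :&: (T1 :|: T2) != set0) = (N i :&: T1 != set0) || (N i :&: T2 != set0).
    by rewrite setIUr setU_eq0 negb_and.
  have Hi : N i :&: (T1 :&: T2) != set0 -> (N i :&: T1 != set0) && (N i :&: T2 != set0).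
    move/meetsP => [x [Ha]]; rewrite inE => /andP [Hb Hc].
    by apply/andP; split; apply/meetsP; exists x.
  move: Hu Hi; have := a_ge0 i.
  case: (N i :&: T1 != set0); case: (N i :&: T2 != set0);
  case: (N i :&: (T1 :|: T2) != set0); case: (N i :&: (T1 :&: T2) != set0) => /= Ha Hu Hi;
  first [ lra | discriminate | (exfalso; by have := Hi isT) ].
rewrite H1 H2 H3 setIUr setU_eq0 (negbTE H1) /=; lra.
Qed.

Lemma supermod i0 (T1 T2 : S) : ~~ (N i0 \subset T1) -> ~~ (N i0 \subset T2) ->
  N i0 \subset T1 :|: T2 ->
  inn T1 + inn T2 + a i0 <= inn (T1 :|: T2) + inn (T1 :&: T2).
Proof.
move=> H1 H2 H3; rewrite /inn !(rsum_mkcond _ a) -!rsum_plus.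
apply: (rsum_gap _ _ _ i0) => [i|].
  have Hi : (N i \subset T1 :&: T2) = (N i \subset T1) && (N i \subset T2) by rewrite subsetI.
  have Hu1 : N i \subset T1 -> N i \subset T1 :|: T2.
    by move=> H; apply: (subset_trans H); apply: subsetUl.
  have Hu2 : N i \subset T2 -> N i \subset T1 :|: T2.
    by move=> H; apply: (subset_trans H); apply: subsetUr.
  move: Hi Hu1 Hu2; have := a_ge0 i.
  case: (N i \subset T1); case: (N i \subset T2);
  case: (N i \subset T1 :|: T2); case: (N i \subset T1 :&: T2) => /= Ha Hi Hu1 Hu2;
  first [ lra | discriminate | (exfalso; by have := Hu1 isT) | (exfalso; by have := Hu2 isT) ].
rewrite (negbTE H1) (negbTE H2) H3 subsetI (negbTE H1) /=; lra.
Qed.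

Lemma cross i0 (X Y : S) : N i0 :&: X != set0 -> ~~ (N i0 \subset Y) ->
  N i0 :&: X \subset Y ->
  cov (X :\: Y) - inn (Y :\: X) + a i0 <= cov X - inn Y.
Proof.
move=> H1 H2 H3.
have E1 : forall A : S, A \subset Y -> (A :&: (X :\: Y) != set0) = false.
  move=> A HA; apply/negbTE/negP => /meetsP [x [Ha]]; rewrite inE => /andP [Hx _].
  by move/negP: Hx; apply; apply: (subsetP HA).
have E2 : forall A : S, (A \subset Y :\: X) = (A \subset Y) && (A :&: X == set0).
  move=> A; apply/idP/andP => [H|[HY HX]].
    split; first by apply: (subset_trans H); apply: subsetDl.
    apply/negPn/negP => /meetsP [x [Ha Hx]].
    by have := subsetP H x Ha; rewrite inE Hx.
  apply/subsetP => x Ha; rewrite inE (subsetP HY x Ha) andbT.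
  apply/negP => Hx; move/eqP: HX => HX.
  have : x \in A :&: X by rewrite inE Ha Hx.
  by rewrite HX inE.
have E3 : forall A : S, A :&: (X :\: Y) != set0 -> A :&: X != set0.
  move=> A /meetsP [x [Ha]]; rewrite inE => /andP [_ Hx].
  by apply/meetsP; exists x.
rewrite /cov /inn !(rsum_mkcond _ a).
have HH : forall (F1 F2 G1 G2 : I -> R), rsum predT F1 - rsum predT G1 + a i0 <= rsum predT F2 - rsum predT G2
   <-> rsum predT (fun i => F1 i + G2 i) + a i0 <= rsum predT (fun i => F2 i + G1 i).
  by move=> F1 F2 G1 G2; rewrite !rsum_plus; split; lra.
apply/HH; apply: (rsum_gap _ _ _ i0) => [i|].
  rewrite E2; have := a_ge0 i; have := E3 (N i).
  case HY : (N i \subset Y).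
    rewrite (E1 _ HY) /=.
    by case: (N i :&: X == set0) => /= _ Ha; lra.
  rewrite /=; case: (N i :&: (X :\: Y) != set0); case: (N i :&: X == set0) => /= H Ha; try lra.
  by have := H isT.
have -> : (N i0 :&: (X :\: Y) != set0) = false.
  apply/negbTE/negP => /meetsP [x [Ha]]; rewrite inE => /andP [Hx HX].
  have : x \in N i0 :&: X by rewrite inE Ha HX.
  by move/(subsetP H3); rewrite (negbTE Hx).
rewrite H1 (negbTE H2) E2 (negbTE H2) /=; lra.
Qed.

End Ineqs.
Arguments cov {I}.
Arguments inn {I}.

Lemma interp (F : finType) (x0 : F) (lb ub : F -> R) :
  (forall i j, lb i <= ub j) -> exists x, forall i, lb i <= x /\ x <= ub i.
Proof.
move=> H.
pose g := fun s : seq F => foldr (fun i acc => Rmax (lb i) acc) (lb x0) s.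
have H1 : forall s : seq F, forall i, i \in s -> lb i <= g s.
  elim=> [|y s IH] i //=; rewrite in_cons => /orP [/eqP ->|/IH Hle].
    exact: Rmax_l.
  by eapply Rle_trans; [exact Hle| apply: Rmax_r].
have H2 : forall s : seq F, exists j, g s = lb j.
  elim=> [|y s [j IH]] /=; first by exists x0.
  rewrite /g /= -/(g s) IH.
  case: (Rle_dec (lb y) (lb j)) => Hd.
    by exists j; rewrite Rmax_right.
  by exists y; rewrite Rmax_left //; lra.
exists (g (enum F)) => i; split; first by apply: H1; rewrite mem_enum.
by have [j ->] := H2 (enum F); exact: H.
Qed.

Lemma lsum_cross (l u : 'I_n -> R) (X Y : S) : (forall k, l k <= u k) ->
  lsum u (Y :\: X) - lsum l (X :\: Y) <= lsum u Y - lsum l X.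
Proof.
move=> Hlu.
have HH : forall (F1 F2 G1 G2 : 'I_n -> R), rsum predT F1 - rsum predT G1 <= rsum predT F2 - rsum predT G2
   <-> rsum predT (fun i => F1 i + G2 i) <= rsum predT (fun i => F2 i + G1 i).
  by move=> F1 F2 G1 G2; rewrite !rsum_plus; split; lra.
rewrite !lsumE; apply/HH; apply: rsum_le => j _; rewrite !inE.
have := Hlu j.
by case: (j \in X); case: (j \in Y) => /=; lra.
Qed.

Lemma perturb (I : finType) (N : I -> S) (a : I -> R) (p : S -> bool) i0 B al :
  rsum (fun i => p (if i == i0 then B else N i)) (fun i => if i == i0 then al else a i)
  = rsum (fun i => p (N i)) a - (if p (N i0) then a i0 else 0) + (if p B then al else 0).
Proof.
rewrite (rsum_mkcond (fun i => p (if i == i0 then B else N i))) (rsum_mkcond (fun i => p (N i))).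
rewrite (rsum_pick predT _ i0) // (rsum_pick predT (fun i => if p (N i) then a i else 0) i0) //.
rewrite !eqxx.
have -> : rsum (fun i => predT i && (i != i0))
  (fun i => if p (if i == i0 then B else N i) then if i == i0 then al else a i else 0)
  = rsum (fun i => predT i && (i != i0)) (fun i => if p (N i) then a i else 0).
  by apply: rsum_ext => // i /andP [_ /negbTE ->].
ring.
Qed.

Lemma lsum1 (l : 'I_n -> R) k : lsum l [set k] = l k.
Proof.
rewrite /lsum (@rsum_ext _ _ (fun j => j == k) _ l) ?rsum_pred1 // => j.
by change ((j \in [set k]) = (j == k)); rewrite inE.
Qed.

Lemma meets1 (A : S) k : (A :&: [set k] != set0) = (k \in A).
Proof.
apply/meetsP/idP => [[x [Ha]]|Hk]; first by rewrite inE => /eqP <-.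
by exists k; rewrite inE eqxx.
Qed.

Definition flow_concl (I : finType) (N : I -> S) (a : I -> R) (l u : 'I_n -> R) :=
  exists x : I -> 'I_n -> R, (forall i j, 0 <= x i j) /\ (forall i j, j \notin N i -> x i j = 0) /\
    (forall i, rsum predT (x i) = a i) /\
    (forall k, l k <= rsum predT (fun i => x i k) /\ rsum predT (fun i => x i k) <= u k).

Arguments flow_concl {I}.

Lemma flow_base (I : finType) (N : I -> S) (a : I -> R) (l u : 'I_n -> R) :
  (forall i, (#|N i| <= 1)%nat) ->
  (forall i, 0 <= a i) ->
  (forall T, lsum l T <= cov N a T) -> (forall T, inn N a T <= lsum u T) ->
  flow_concl N a l u.
Proof.
move=> H1 Ha HL HU.
have Hsh : forall i, N i = set0 \/ exists j0, N i = [set j0].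
  move=> i; have := H1 i; rewrite leq_eqVlt ltnS leqn0 => /orP [/cards1P [j0 ->]|].
    by right; exists j0.
  by rewrite cards_eq0 => /eqP ->; left.
have Hz : forall i, N i = set0 -> a i = 0.
  move=> i Hi.
  have : inn N a set0 <= 0.
    by have := HU set0; rewrite /lsum rsum_pred0 // => j; change (~~ (j \in (set0 : S))); rewrite inE.
  have : a i <= inn N a set0.
    by apply: rsum_term; [rewrite Hi subxx | move=> *; exact: Ha].
  have := Ha i; lra.
exists (fun i j => if j \in N i then a i else 0); split; last split; last split.
- by move=> i j; case: ifP => _; [exact: Ha | lra].
- by move=> i j /negbTE ->.
- move=> i; case: (Hsh i) => [Hi|[j0 Hi]].
    by rewrite Hz // rsum_eq0 // => j _; rewrite Hi inE.
  rewrite (rsum_pick predT _ j0) // Hi inE eqxx rsum_eq0; first by ring.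
  by move=> j /andP [_ Hj]; rewrite inE (negbTE Hj).
- move=> k.
  have -> : rsum predT (fun i => if k \in N i then a i else 0) = rsum (fun i => k \in N i) a.
    by rewrite [RHS]rsum_mkcond.
  split.
    have := HL [set k]; rewrite lsum1 /cov.
    by rewrite (@rsum_ext _ _ (fun i => k \in N i) _ a) // => i; rewrite meets1.
  rewrite -lsum1; apply: Rle_trans (HU [set k]).
  apply: rsum_sub => [i Hk|i _]; last exact: Ha.
  case: (Hsh i) => [Hi|[j0 Hi]]; first by move: Hk; rewrite Hi inE.
  by move: Hk; rewrite Hi !inE => /eqP ->; rewrite sub1set inE.
Qed.

Lemma meet0 (A T : S) x : A :&: T == set0 -> x \in A -> x \in T -> False.
Proof.
move/eqP => H xa xt; have : x \in A :&: T by rewrite inE xa xt.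
by rewrite H inE.
Qed.

Arguments meet0 {A T x}.

Lemma noMeet (A T : S) : (forall x, x \in A -> x \in T -> False) -> A :&: T == set0.
Proof.
move=> H; apply/eqP/setP => x; rewrite !inE; apply/negbTE/negP => /andP [H1 H2].
exact: (H _ H1 H2).
Qed.

Lemma flow_main m : forall (I : finType) (N : I -> S) (a : I -> R) (l u : 'I_n -> R),
  (\sum_(i : I) #|N i| <= m)%nat -> (forall i, 0 <= a i) -> (forall k, l k <= u k) ->
  (forall T, lsum l T <= cov N a T) -> (forall T, inn N a T <= lsum u T) -> flow_concl N a l u.
Proof.
elim: m => [|m IH] I N a l u Hm Ha Hlu HL HU.
  apply: flow_base => // i.
  have : (#|N i| <= \sum_(j : I) #|N j|)%nat by rewrite (bigD1 i) //= leq_addr.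
  by move/leq_trans => /(_ _ Hm) /leq_trans; apply.
case: (boolP [forall i, #|N i| <= 1]%nat) => [/forallP Hall | Hn].
  by apply: flow_base.
move: Hn; rewrite negb_forall => /existsP [i0]; rewrite -ltnNge => Hi0.
pose A := N i0.
have : A != set0 by rewrite -card_gt0; apply: ltnW.
case/set0Pn => k Hk.
pose B := A :\ k.
have HcB : #|A| = (#|B|).+1 by rewrite (cardsD1 k A) Hk.
have HB0 : B != set0 by rewrite -card_gt0 -ltnS -HcB.
have HBA : B \subset A by apply: subD1set.
pose a0 := a i0.
have Ha0 : 0 <= a0 by apply: Ha.
have EA : forall T : S, (A :&: T != set0) = (k \in T) || (B :&: T != set0).
  move=> T; apply/meetsP/orP => [[x [xa xt]]|[kt|/meetsP [x [xb xt]]]].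
    case: (eqVneq x k) => [Hx|Hx]; first by left; rewrite -Hx.
    by right; apply/meetsP; exists x; split => //; rewrite /B !inE Hx xa.
    by exists k.
  by exists x; split => //; apply: (subsetP HBA).
have EA2 : forall T : S, (A \subset T) = (k \in T) && (B \subset T).
  move=> T; apply/idP/andP => [H|[kt bt]].
    by split; [apply: (subsetP H) | apply: subset_trans H].
  apply/subsetP => x xa; case: (eqVneq x k) => [->//|Hx].
  by apply: (subsetP bt); rewrite /B !inE Hx xa.
have NAsub : forall T : S, ~~ (B \subset T) -> ~~ (A \subset T).
  by move=> T HB; rewrite EA2 (negbTE HB) andbF.
pose lb := fun T : S =>
  Rmax (if (k \notin T) && (A :&: T != set0) then a0 - (cov N a T - lsum l T) else 0)
       (if (k \in T) && ~~ (B \subset T) then a0 - (lsum u T - inn N a T) else 0).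
pose ub := fun T : S =>
  Rmin (if (k \in T) && (B :&: T == set0) then cov N a T - lsum l T else a0)
       (if (k \notin T) && (B \subset T) then lsum u T - inn N a T else a0).
have Hlbub : forall T1 T2, lb T1 <= ub T2.
  move=> T1 T2; rewrite /lb /ub.
  have := HL T1; have := HL T2; have := HU T1; have := HU T2 => HU2 HU1 HL2 HL1.
  apply: Rmax_lub; apply: Rmin_glb.
  - case: ifP => [/andP [k1 m1]|_]; case: ifP => [/andP [k2 m2]|_]; try lra.
    have := lsum_incl l T1 T2; have := HL (T1 :|: T2); have := HL (T1 :&: T2).
    suff: cov N a (T1 :|: T2) + cov N a (T1 :&: T2) + a0 <= cov N a T1 + cov N a T2 by lra.
    apply: submod => //; first by apply/meetsP; exists k.
    apply: noMeet => x xa; rewrite inE => /andP [x1 x2].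
    case: (eqVneq x k) => [Hx|Hx]; first by move: k1; rewrite -Hx x1.
    by apply: (meet0 m2 _ x2); rewrite /B !inE Hx xa.
  - case: ifP => [/andP [k1 m1]|_]; case: ifP => [/andP [k2 m2]|_]; try lra.
    have := lsum_cross l u T1 T2 Hlu; have := HL (T1 :\: T2); have := HU (T2 :\: T1).
    suff: cov N a (T1 :\: T2) - inn N a (T2 :\: T1) + a0 <= cov N a T1 - inn N a T2 by lra.
    apply: cross => //.
      by apply/negP => /subsetP /(_ k Hk); rewrite (negbTE k2).
    apply/subsetP => x; rewrite inE => /andP [xa x1].
    case: (eqVneq x k) => [Hx|Hx]; first by move: k1; rewrite -Hx x1.
    by apply: (subsetP m2); rewrite /B !inE Hx xa.
  - case: ifP => [/andP [k1 m1]|_]; case: ifP => [/andP [k2 m2]|_]; try lra.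
    have := lsum_cross l u T2 T1 Hlu; have := HL (T2 :\: T1); have := HU (T1 :\: T2).
    suff: cov N a (T2 :\: T1) - inn N a (T1 :\: T2) + a0 <= cov N a T2 - inn N a T1 by lra.
    apply: cross => //; first by apply/meetsP; exists k.
      by apply: NAsub.
    apply/subsetP => x; rewrite inE => /andP [xa x2].
    case: (eqVneq x k) => [->//|Hx].
    by exfalso; apply: (meet0 m2 _ x2); rewrite /B !inE Hx xa.
  - case: ifP => [/andP [k1 m1]|_]; case: ifP => [/andP [k2 m2]|_]; try lra.
    have := lsum_incl u T1 T2; have := HU (T1 :|: T2); have := HU (T1 :&: T2).
    suff: inn N a T1 + inn N a T2 + a0 <= inn N a (T1 :|: T2) + inn N a (T1 :&: T2) by lra.
    apply: supermod => //; first by apply: NAsub.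
      by apply/negP => /subsetP /(_ k Hk); rewrite (negbTE k2).
    apply/subsetP => x xa; rewrite inE.
    case: (eqVneq x k) => [->|Hx]; first by rewrite k1.
    by rewrite (subsetP m2) ?orbT // /B !inE Hx xa.
have [al Hal] := @interp _ set0 lb ub Hlbub.
have Hlb : forall T, lb T <= al by move=> T; case: (Hal T).
have Hub : forall T, al <= ub T by move=> T; case: (Hal T).
have Hal0 : 0 <= al /\ al <= a0.
  have := Hal set0; rewrite /lb /ub /= inE setI0 eqxx subset0 (negbTE HB0) /=.
  by rewrite Rmax_left ?Rmin_left; lra.
have HlbL1 : forall T : S, (k \notin T) && (A :&: T != set0) -> a0 - (cov N a T - lsum l T) <= al.
  move=> T H; apply: Rle_trans (Hlb T); rewrite /lb H; apply: Rmax_l.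
have HlbU2 : forall T : S, (k \in T) && ~~ (B \subset T) -> a0 - (lsum u T - inn N a T) <= al.
  move=> T H; apply: Rle_trans (Hlb T); rewrite /lb H; apply: Rmax_r.
have HubL2 : forall T : S, (k \in T) && (B :&: T == set0) -> al <= cov N a T - lsum l T.
  move=> T H; apply: Rle_trans (Hub T) _; rewrite /ub H; apply: Rmin_l.
have HubU1 : forall T : S, (k \notin T) && (B \subset T) -> al <= lsum u T - inn N a T.
  move=> T H; apply: Rle_trans (Hub T) _; rewrite /ub H; apply: Rmin_r.
pose be := a0 - al.
have Hbe : 0 <= be by rewrite /be; lra.
have [x [Hx1 [Hx2 [Hx3 Hx4]]]] :
  flow_concl (fun i => if i == i0 then B else N i) (fun i => if i == i0 then al else a i)
    (fun j => l j + (if j == k then - be else 0)) (fun j => u j + (if j == k then - be else 0)).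
  apply: IH.
  - have Hrest : (\sum_(i | i != i0) #|(if i == i0 then B else N i)| = \sum_(i | i != i0) #|N i|)%nat.
      by apply: eq_bigr => i /negbTE ->.
    rewrite (bigD1 i0) //= eqxx Hrest; move: Hm; rewrite (bigD1 i0) //= -/A HcB addSn.
    by rewrite ltnS.
  - by move=> i; case: ifP => _; [lra | apply: Ha].
  - by move=> j; have := Hlu j; case: ifP => _; lra.
  - move=> T; rewrite lsum_ind /cov.
    rewrite (perturb _ N a (fun X => X :&: T != set0)) /= -/A -/(cov N a T) -/a0 EA.
    have := HL T.
    case kT : (k \in T); case bT : (B :&: T != set0) => /= H; rewrite /be.
    + lra.
    + have := HubL2 T; rewrite kT (negbFE bT) /= => /(_ isT); lra.
    + have := HlbL1 T; rewrite EA kT bT /= => /(_ isT); lra.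
    + lra.
  - move=> T; rewrite lsum_ind /inn.
    rewrite (perturb _ N a (fun X => X \subset T)) /= -/A -/(inn N a T) -/a0 EA2.
    have := HU T.
    case kT : (k \in T); case bT : (B \subset T) => /= H; rewrite /be.
    + lra.
    + have := HlbU2 T; rewrite kT bT /= => /(_ isT); lra.
    + have := HubU1 T; rewrite kT bT /= => /(_ isT); lra.
    + lra.
exists (fun i j => if i == i0 then x i0 j + (if j == k then be else 0) else x i j).
split; last split; last split.
- move=> i j; case: ifP => _; last exact: Hx1.
  by have := Hx1 i0 j; case: ifP => _; lra.
- move=> i j Hj; case: ifP => [/eqP Hi|Hi].
    subst i.
    have Hjk : (j == k) = false by apply/negbTE; apply: contraNneq Hj => ->; exact: Hk.
    rewrite Hjk Hx2; first by ring.
    by rewrite eqxx; apply: contraNN Hj; apply: (subsetP HBA).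
  by apply: Hx2; rewrite Hi.
- move=> i; case: (eqVneq i i0) => [->|Hi].
    rewrite ?eqxx rsum_plus (Hx3 i0) ?eqxx.
    rewrite -(rsum_mkcond (fun j => j == k) (fun _ => be)) rsum_pred1 /be /a0; ring.
  by rewrite (Hx3 i) ?(negbTE Hi).
- move=> j.
  have -> : rsum predT (fun i => if i == i0 then x i0 j + (if j == k then be else 0) else x i j)
          = rsum predT (fun i => x i j) + (if j == k then be else 0).
    rewrite (rsum_pick predT _ i0) // (rsum_pick predT (fun i => x i j) i0) // eqxx.
    have -> : rsum (fun i => predT i && (i != i0))
       (fun i => if i == i0 then x i0 j + (if j == k then be else 0) else x i j)
       = rsum (fun i => predT i && (i != i0)) (fun i => x i j).
      by apply: rsum_ext => // i /andP [_ /negbTE ->].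
    ring.
  have := Hx4 j; case: ifP => _; lra.
Qed.

End Flow.
Arguments meet0 {n A T x}.
Arguments noMeet {n A T}.
Arguments lsum {n}.
Arguments cov {n I}.
Arguments inn {n I}.
Arguments flow_concl {n I}.


Lemma mono_lt (g : R -> R) x y : nondecr0 g -> 0 <= x -> 0 <= y -> g x < g y -> x < y.
Proof.
move=> Hg Hx Hy H; apply: Rnot_le_lt => Hle.
have := Hg y x Hy Hle; lra.
Qed.

Lemma lub_approx (E : R -> Prop) m w : is_lub E m -> w < m -> exists e, E e /\ w < e.
Proof.
move=> [Hub Hl] Hw; apply: NNPP => Hn.
have : m <= w.
  apply: Hl => e He; apply: Rnot_lt_le => Hlt; apply: Hn; by exists e.
lra.
Qed.

Arguments lub_approx {E m w}.

Lemma minpt (g : R -> R) b y : nondecr0 g -> cont0 g -> 0 <= b -> g 0 <= y -> y <= g b ->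
  exists lam, 0 <= lam /\ lam <= b /\ g lam = y /\ (forall w, 0 <= w -> w < lam -> g w < y).
Proof.
move=> Hm Hc Hb H0 Hy.
case: (Req_dec (g 0) y) => Hg0.
  by exists 0; split; [lra|split; [lra|split=> // w Hw1 Hw2; lra]].
have Hg0' : g 0 < y by lra.
pose E := fun w => 0 <= w /\ w <= b /\ g w < y.
have HE : bound E by exists b => w [_ [? _]].
have HE0 : exists w, E w by exists 0; rewrite /E; split; [lra|split; [lra|lra]].
have [lam Hlam] := completeness E HE HE0.
have Hl0 : 0 <= lam by case: Hlam => H _; apply: H; rewrite /E; split; [lra|split; lra].
have Hlb : lam <= b by case: Hlam => _ H; apply: H => w [_ [? _]].
have Hbelow : forall w, 0 <= w -> w < lam -> g w < y.
  move=> w Hw Hwl; have [e [[He0 [Heb Hey]] Hwe]] := lub_approx Hlam Hwl.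
  have := Hm w e Hw (Rlt_le _ _ Hwe); lra.
exists lam; split=> //; split=> //; split=> //.
case: (Rtotal_order (g lam) y) => [Hlt|[//|Hgt]].
  have Hlb' : lam < b.
    case: (Rle_lt_or_eq_dec _ _ Hlb) => // Heq; rewrite Heq in Hlt; lra.
  have [del [Hd Hdel]] := Hc lam Hl0 (y - g lam) ltac:(lra).
  pose w := Rmin (lam + del / 2) b.
  have Hw1 : lam < w by rewrite /w; apply: Rmin_glb_lt; lra.
  have Hw2 : w <= b by apply: Rmin_r.
  have Hw3 : w <= lam + del / 2 by apply: Rmin_l.
  have := Hdel w ltac:(lra) ltac:(rewrite Rabs_right; lra).
  move=> Habs; have Hgw : g w < y.
    have := Rle_abs (g w - g lam); lra.
  have : w <= lam by case: Hlam => H _; apply: H; rewrite /E; split; [lra|split; lra].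
  lra.
have Hl0' : 0 < lam.
  case: (Rle_lt_or_eq_dec _ _ Hl0) => // Heq; rewrite -Heq in Hgt; lra.
have [del [Hd Hdel]] := Hc lam Hl0 (g lam - y) ltac:(lra).
pose w := Rmax 0 (lam - del / 2).
have Hw1 : w < lam by rewrite /w; apply: Rmax_lub_lt; lra.
have Hw0 : 0 <= w by apply: Rmax_l.
have Hw3 : lam - del / 2 <= w by apply: Rmax_r.
have := Hdel w Hw0 ltac:(rewrite Rabs_left; lra).
move=> Habs; have := Hbelow w Hw0 Hw1.
have := Rle_abs (g lam - g w); rewrite Rabs_minus_sym in Habs; lra.
Qed.

Arguments minpt {g b y}.

Lemma hipt (g : R -> R) y0 d M : nondecr0 g -> cont0 g -> 0 <= y0 -> g y0 = d -> 0 <= M ->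
  exists H, y0 <= H /\ g H = d /\ (y0 + M <= H \/ forall z, 0 <= z -> g z <= d -> z <= H).
Proof.
move=> Hm Hc Hy0 Hgy HM.
case: (classic (exists z0, 0 <= z0 /\ d < g z0)) => [[z0 [Hz0 Hdz]]|Hn].
  pose E := fun z => 0 <= z /\ g z <= d.
  have HE : bound E.
    exists z0 => z [Hz Hgz]; apply: Rnot_lt_le => Hlt.
    have := Hm z0 z Hz0 (Rlt_le _ _ Hlt); lra.
  have HE0 : exists z, E z by exists y0; split; lra.
  have [H HH] := completeness E HE HE0.
  have Hy0H : y0 <= H by case: HH => Hu _; apply: Hu; split; lra.
  exists H; split=> //; split.
    have H1 : d <= g H by rewrite -Hgy; apply: Hm.
    case: (Rle_lt_or_eq_dec _ _ H1) => // Hlt.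
    have [del [Hd Hdel]] := Hc H ltac:(lra) (g H - d) ltac:(lra).
    have [e [[He0 Hed] Hee]] := lub_approx (w:=H - del) HH ltac:(lra).
    have HeH : e <= H by case: HH => Hu _; apply: Hu.
    have := Hdel e He0 ltac:(rewrite Rabs_left1; lra).
    move=> Habs; have := Rle_abs (g H - g e); rewrite Rabs_minus_sym in Habs.
    have := Hm e H He0 HeH; lra.
  by right => z Hz Hgz; case: HH => Hu _; apply: Hu.
exists (y0 + M); split; first lra; split; last by left; lra.
have H1 : d <= g (y0 + M) by rewrite -Hgy; apply: Hm; lra.
have H2 : g (y0 + M) <= d.
  apply: Rnot_lt_le => Hlt; apply: Hn; exists (y0 + M); split; lra.
lra.
Qed.
Arguments hipt {g y0 d M}.

Lemma fin_ub (F : finType) (P : pred F) (t : F -> R) (b : R) :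
  (forall i, P i -> t i < b) -> exists M, M < b /\ forall i, P i -> t i <= M.
Proof.
move=> H.
pose g := fun s : seq F => foldr (fun i acc => if P i then Rmax (t i) acc else acc) (b - 1) s.
have H1 : forall s, g s < b.
  elim=> [|y s IH] /=; first lra.
  case: ifP => Py; last exact: IH.
  by apply: Rmax_lub_lt => //; apply: H.
have H2 : forall s i, i \in s -> P i -> t i <= g s.
  elim=> [|y s IH] i //=; rewrite in_cons => /orP [/eqP ->|Hi] Pi.
    by rewrite Pi; apply: Rmax_l.
  case: ifP => _; last exact: IH.
  by apply: Rle_trans (IH _ Hi Pi) _; apply: Rmax_r.
exists (g (enum F)); split => // i Pi; apply: H2 => //; by rewrite mem_enum.
Qed.

Lemma fin_lb (F : finType) (P : pred F) (t : F -> R) (b : R) :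
  (forall i, P i -> b < t i) -> exists m, b < m /\ forall i, P i -> m <= t i.
Proof.
move=> H; have [M [HM HM2]] := @fin_ub F P (fun i => - t i) (- b) ltac:(by move=> i /H; lra).
by exists (- M); split; [lra | move=> i /HM2; lra].
Qed.

Section EqLemmas.
Variable n : nat.
Variable f : 'I_n -> R -> R.
Hypothesis f_mono : forall j, nondecr0 (f j).
Hypothesis f_cont : forall j, cont0 (f j).

Lemma wit_mono (T : {set 'I_n}) (x y : 'I_n -> R) c d : T != set0 ->
  (forall k, k \in T -> 0 <= x k /\ f k (x k) = c) ->
  (forall k, k \in T -> 0 <= y k /\ f k (y k) = d) ->
  rsum (mem T) x <= rsum (mem T) y -> c <= d.
Proof.
move=> /set0Pn [k0 Hk0] Hx Hy Hs; apply: Rnot_lt_le => Hdc.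
have Hlt : forall k, k \in T -> y k < x k.
  move=> k Hk; have [Hx0 Hxe] := Hx k Hk; have [Hy0 Hye] := Hy k Hk.
  by apply: (@mono_lt (f k) (y k) (x k) (f_mono k)) => //; lra.
have : rsum (mem T) y < rsum (mem T) x.
  apply: (@rsum_lt _ (mem T) y x k0) => [//|k Hk|]; [exact/Rlt_le/Hlt | exact: Hlt].
lra.
Qed.

Lemma eqz_wit (T : {set 'I_n}) m c : eqz f T m c ->
  T != set0 /\ exists x, (forall k, k \in T -> 0 <= x k /\ f k (x k) = c) /\ rsum (mem T) x = m.
Proof.
move=> [HT [x [H1 [H2 H3]]]]; split => //; exists x; split => // k Hk.
by split; [apply: H1 | apply: H3].
Qed.

Lemma eqz_mono (T : {set 'I_n}) m1 m2 c d : eqz f T m1 c -> eqz f T m2 d -> m1 <= m2 -> c <= d.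
Proof.
move=> /eqz_wit [HT [x [Hx Hxs]]] /eqz_wit [_ [y [Hy Hys]]] Hm.
by apply: (@wit_mono T x y c d HT Hx Hy); lra.
Qed.

Lemma exist_eq (T : {set 'I_n}) (x : 'I_n -> R) c mu0 : T != set0 ->
  (forall k, k \in T -> 0 <= x k /\ f k (x k) = c) -> rsum (mem T) x <= mu0 ->
  exists d, eqz f T mu0 d.
Proof.
move=> HT Hx Hs.
have [k0 Hk0] := set0Pn _ HT.
pose NT := rsum (mem T) (fun _ => 1).
have HNT : 1 <= NT by apply: (@rsum_term _ (mem T) (fun _ => 1) k0) => // *; lra.
have Hmu0 : 0 <= mu0.
  have := @rsum_ge0 _ (mem T) x (fun k Hk => proj1 (Hx k Hk)); lra.
have Hf0 : forall k, k \in T -> f k 0 <= c.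
  move=> k Hk; have [H1 H2] := Hx k Hk; rewrite -H2; apply: f_mono; lra.
have Hle_sum : forall z : 'I_n -> R, (forall k, k \in T -> 0 <= z k) ->
    forall k, k \in T -> z k <= rsum (mem T) z.
  by move=> z Hz k Hk; apply: rsum_term.
pose A := fun d => c <= d /\ exists z : 'I_n -> R,
  (forall k, k \in T -> 0 <= z k /\ d <= f k (z k)) /\ rsum (mem T) z <= mu0.
have HA0 : A c.
  split; first lra.
  by exists x; split => // k Hk; have [? ?] := Hx k Hk; split; lra.
have HAb : bound A.
  exists (f k0 mu0) => d [_ [z [Hz Hzs]]].
  have [Hz0 Hzd] := Hz k0 Hk0; apply: Rle_trans Hzd _; apply: f_mono => //.
  have := Hle_sum z (fun k Hk => proj1 (Hz k Hk)) k0 Hk0; lra.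
have [ds Hds] := completeness A HAb (ex_intro _ c HA0).
have Hcds : c <= ds by case: Hds => H _; apply: H.
have Hnear : forall t, t < ds -> exists d z, t < d /\
    (forall k, k \in T -> 0 <= z k /\ d <= f k (z k)) /\ rsum (mem T) z <= mu0.
  by move=> t Ht; have [d [[_ [z Hz]] Htd]] := lub_approx Hds Ht; exists d, z.
have Hreach : forall k, k \in T -> ds <= f k mu0.
  move=> k Hk; apply: Rnot_lt_le => Hlt.
  have [d [z [Htd [Hz Hzs]]]] := Hnear _ Hlt.
  have [Hz0 Hzd] := Hz k Hk.
  have : mu0 < z k by apply: (@mono_lt (f k) mu0 (z k) (f_mono k)) => //; lra.
  have := Hle_sum z (fun k Hk => proj1 (Hz k Hk)) k Hk; lra.
have : forall k, exists lam, k \in T -> 0 <= lam /\ lam <= mu0 /\ f k lam = ds /\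
    (forall w, 0 <= w -> w < lam -> f k w < ds).
  move=> k; case: (boolP (k \in T)) => Hk; last by exists 0.
  have [lam Hl] := minpt (f_mono k) (f_cont k) Hmu0
     (Rle_trans _ _ _ (Hf0 k Hk) Hcds) (Hreach k Hk).
  by exists lam.
case/fin_all_exists => lam Hlam.
have Hlsum : rsum (mem T) lam <= mu0.
  apply: Rnot_lt_le => Hlt.
  pose eps := (rsum (mem T) lam - mu0) / NT.
  have Heps : 0 < eps by rewrite /eps; apply: Rdiv_lt_0_compat; lra.
  have : forall k, exists t, k \in T -> t < ds /\
      forall z, 0 <= z -> t < f k z -> lam k - eps < z.
    move=> k; case: (boolP (k \in T)) => Hk; last by exists 0.
    have [Hl0 [Hlm [Hle Hlw]]] := Hlam k Hk.
    case: (Rlt_le_dec (lam k - eps) 0) => Hc0.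
      by exists (ds - 1) => _; split; [lra | move=> z Hz _; lra].
    exists (f k (lam k - eps)) => _; split; first by apply: Hlw; lra.
    move=> z Hz Hlt'; apply: Rnot_le_lt => Hle'.
    have := f_mono k z (lam k - eps) Hz Hle'; lra.
  case/fin_all_exists => t Ht.
  have [M [HM HMt]] := @fin_ub _ (mem T) t ds (fun k Hk => proj1 (Ht k Hk)).
  have [d [z [HMd [Hz Hzs]]]] := Hnear _ HM.
  have Hgt : forall k, k \in T -> lam k - eps < z k.
    move=> k Hk; have [Hz0 Hzd] := Hz k Hk; apply: (proj2 (Ht k Hk)) => //.
    have := HMt k Hk; lra.
  have : rsum (mem T) (fun k => lam k - eps) < rsum (mem T) z.
    apply: (@rsum_lt _ (mem T) _ _ k0) => //; last exact: Hgt.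
    by move=> k Hk; apply: Rlt_le; apply: Hgt.
  have -> : rsum (mem T) (fun k => lam k - eps) = rsum (mem T) lam - eps * NT.
    have -> : rsum (mem T) (fun k => lam k - eps) = rsum (mem T) (fun k => lam k + (- eps) * 1).
      by apply: rsum_ext => // k _; ring.
    by rewrite rsum_plus rsum_scale /NT; ring.
  have -> : eps * NT = rsum (mem T) lam - mu0 by rewrite /eps; field; lra.
  lra.
have : forall k, exists H, k \in T -> lam k <= H /\ f k H = ds /\
    (lam k + mu0 <= H \/ forall z, 0 <= z -> f k z <= ds -> z <= H).
  move=> k; case: (boolP (k \in T)) => Hk; last by exists 0.
  have [Hl0 [_ [Hle _]]] := Hlam k Hk.
  by have [H HH] := hipt (f_mono k) (f_cont k) Hl0 Hle Hmu0; exists H.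
case/fin_all_exists => H HH.
have HH0 : forall k, k \in T -> 0 <= H k.
  move=> k Hk; have [Hl0 _] := Hlam k Hk; have [? _] := HH k Hk; lra.
exists ds; split => //.
case: (Rlt_le_dec (rsum (mem T) H) mu0) => Hcase.
  exfalso.
  have Hmax : forall k, k \in T -> forall z, 0 <= z -> f k z <= ds -> z <= H k.
    move=> k Hk; have [_ [_ [Hb|Hb]]] := HH k Hk => //.
    have := Hle_sum H HH0 k Hk; have [Hl0 _] := Hlam k Hk; lra.
  pose eps := (mu0 - rsum (mem T) H) / NT.
  have Heps : 0 < eps by rewrite /eps; apply: Rdiv_lt_0_compat; lra.
  have Hw : forall k, k \in T -> ds < f k (H k + eps).
    move=> k Hk; apply: Rnot_le_lt => Hle.
    have := Hmax k Hk (H k + eps) ltac:(have := HH0 k Hk; lra) Hle; lra.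
  have [m [Hm1 Hm2]] := @fin_lb _ (mem T) (fun k => f k (H k + eps)) ds Hw.
  have HAm : A m.
    split; first lra.
    exists (fun k => H k + eps); split.
      by move=> k Hk; split; [have := HH0 k Hk; lra | exact: Hm2].
    have -> : rsum (mem T) (fun k => H k + eps) = rsum (mem T) H + eps * NT.
      rewrite rsum_plus -rsum_scale; congr (_ + _).
      by apply: rsum_ext => // ? _; ring.
    by rewrite /eps; apply: Req_le; field; lra.
  have : m <= ds by case: Hds => Hu _; apply: Hu.
  lra.
have HlH : forall k, k \in T -> lam k <= H k by move=> k Hk; case: (HH k Hk).
have HslH : rsum (mem T) lam <= rsum (mem T) H by apply: rsum_le.
case: (Req_dec (rsum (mem T) H) (rsum (mem T) lam)) => Heq.
  exists lam; split; first by move=> k Hk; case: (Hlam k Hk).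
  split; first lra.
  by move=> k Hk; case: (Hlam k Hk) => _ [_ []].
pose th := (mu0 - rsum (mem T) lam) / (rsum (mem T) H - rsum (mem T) lam).
have Hth0 : 0 <= th.
  rewrite /th; apply: Rmult_le_pos; first lra.
  by apply/Rlt_le/Rinv_0_lt_compat; lra.
have Hth1 : th <= 1.
  rewrite /th; apply: (Rmult_le_reg_r (rsum (mem T) H - rsum (mem T) lam)); first lra.
  by rewrite Rmult_assoc Rinv_l; lra.
exists (fun k => lam k + th * (H k - lam k)); split.
  move=> k Hk; have [Hl0 _] := Hlam k Hk; have := HlH k Hk.
  by move=> *; have := Rmult_le_pos th (H k - lam k) Hth0 ltac:(lra); lra.
split.
  rewrite rsum_plus.
  have -> : rsum (mem T) (fun k => th * (H k - lam k)) =
            th * (rsum (mem T) H - rsum (mem T) lam).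
    rewrite rsum_scale; congr (_ * _).
    have -> : rsum (mem T) (fun k => H k - lam k) = rsum (mem T) (fun k => H k + - lam k).
      by [].
    by rewrite rsum_plus rsum_opp.
  by rewrite /th; field; lra.
move=> k Hk; have [Hl0 [_ [Hle _]]] := Hlam k Hk; have [_ [Hfe _]] := HH k Hk.
have Hy1 : lam k <= lam k + th * (H k - lam k).
  by have := Rmult_le_pos th (H k - lam k) Hth0 ltac:(have := HlH k Hk; lra); lra.
have Hy2 : lam k + th * (H k - lam k) <= H k.
  have := HlH k Hk => HlHk.
  have : th * (H k - lam k) <= 1 * (H k - lam k) by apply: Rmult_le_compat_r; lra.
  lra.
have := f_mono k _ _ Hl0 Hy1; have := f_mono k (lam k + th * (H k - lam k)) (H k) ltac:(lra) Hy2; lra.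
Qed.

End EqLemmas.
Arguments wit_mono {n f} f_mono {T x y c d}.
Arguments eqz_wit {n f T m c}.
Arguments eqz_mono {n f} f_mono {T m1 m2 c d}.
Arguments exist_eq {n f} f_mono f_cont {T x c mu0}.


Section Main.
Variable n : nat.
Notation S := {set 'I_n}.
Variable f : 'I_n -> R -> R.
Hypothesis f_mono : forall j, nondecr0 (f j).
Hypothesis f_cont : forall j, cont0 (f j).
Implicit Types (mu : S -> R) (Q T U Rs P : S) (c : R).

Definition LH (mu : S -> R) (Q : S) c := forall T : S, T \subset Q ->
  exists x : 'I_n -> R, (forall k, k \in T -> 0 <= x k /\ f k (x k) = c) /\
     rsum (mem T) x <= massMeet mu Q T.

Lemma rsum_mem0 (F : 'I_n -> R) : rsum (mem (set0 : S)) F = 0.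
Proof. by rewrite rsum_pred0 // => j; change (~~ (j \in (set0 : S))); rewrite inE. Qed.

Lemma rsum_mem1 (F : 'I_n -> R) k : rsum (mem [set k]) F = F k.
Proof.
rewrite (@rsum_ext _ _ (fun j => j == k) _ F) ?rsum_pred1 // => j.
by change ((j \in [set k]) = (j == k)); rewrite inE.
Qed.


Lemma LH_intro mu Q c : (forall T : S, T != set0 -> T \subset Q ->
  exists x : 'I_n -> R, (forall k, k \in T -> 0 <= x k /\ f k (x k) = c) /\
     rsum (mem T) x <= massMeet mu Q T) -> LH mu Q c.
Proof.
move=> H T HT; case: (eqVneq T set0) => [->|HT0]; last exact: H.
exists (fun _ => 0); split; first by move=> k; rewrite inE.
rewrite rsum_mem0 /massMeet rsum_pred0; first lra.
by move=> Rs; rewrite setI0 eqxx andbF.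
Qed.

Lemma LH_of_inD mu U Q c : inD f mu U Q c -> LH mu Q c.
Proof.
move=> [HQ [HU [HE HM]]]; apply: LH_intro => T HT0 HTQ.
have : ~ (forall m, 0 <= m -> m <= massMeet mu Q T -> ~ eqz f T m c).
  by move=> H; apply: (HM T); split => //; split.
move/not_all_ex_not => [m Hm1].
have [Hm0 Hm2] := imply_to_and _ _ Hm1.
have [Hm Hm3] := imply_to_and _ _ Hm2.
have Heq := NNPP _ Hm3.
have [_ [x [Hx Hxs]]] := eqz_wit Heq.
by exists x; split => //; rewrite Hxs.
Qed.

Lemma inD_of_LH mu Q c : Q != set0 -> Eval f mu Q c -> LH mu Q c -> inD f mu setT Q c.
Proof.
move=> HQ HE HL; split => //; split; first exact: subsetT.
split => // T [HT0 [HTQ HM]].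
have [x [Hx Hxs]] := HL T HTQ.
apply: (HM (rsum (mem T) x)) => //.
  by apply: rsum_ge0 => k Hk; case: (Hx k Hk).
split => //; exists x; split; first by move=> k Hk; case: (Hx k Hk).
by split => // k Hk; case: (Hx k Hk).
Qed.

Lemma meetSS mu Q : massMeet mu Q Q = massIn mu Q.
Proof.
apply: rsum_ext => // Rs; rewrite andbC; case HR: (Rs \subset Q); rewrite /= ?andbF //.
by move/setIidPl: HR => ->.
Qed.

Lemma massIn0 mu : massIn mu set0 = 0.
Proof.
by rewrite /massIn rsum_pred0 // => Rs; rewrite subset0; case: (Rs == set0).
Qed.

Lemma meet_sub (Rs T P : S) : Rs \subset P -> (Rs :&: (T :&: P) != set0) = (Rs :&: T != set0).
Proof.
by move/setIidPl => HR; rewrite (setIC T) setIA HR.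
Qed.

Lemma meet_ne0 (Rs T : S) : Rs :&: T != set0 -> Rs != set0.
Proof. by apply: contraNN => /eqP ->; rewrite set0I. Qed.

Lemma massIn_split mu T (T' : S) : T' \subset T ->
  massIn mu T = massIn mu (T :\: T') + massMeet mu T T'.
Proof.
move=> HT; rewrite /massIn (rsum_split _ (fun Rs : S => Rs :&: T' != set0) mu) Rplus_comm.
congr (_ + _).
  apply: rsum_ext => // Rs; rewrite /= -andbA.
  case HR0: (Rs != set0) => //=.
  apply/idP/idP.
    move=> /andP [HRT HRm]; apply/subsetP => x Hx; rewrite inE (subsetP HRT x Hx) andbT.
    apply/negP => Hx'; move: HRm; rewrite negbK => HRm.
    exact: (meet0 HRm Hx Hx').
  move=> HR; apply/andP; split; first by apply: subset_trans HR (subsetDl _ _).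
  rewrite negbK; apply: noMeet => x Hx Hx'; have := subsetP HR x Hx.
  by rewrite inE Hx'.
apply: rsum_ext => // Rs; rewrite /=.
case HRm : (Rs :&: T' != set0); last by rewrite !andbF.
by rewrite (meet_ne0 _ _ HRm) andbT.
Qed.

Lemma LH_set0 mu c : LH mu set0 c.
Proof.
apply: LH_intro => T HT0 HT; exfalso; move: HT0; by rewrite -subset0 HT.
Qed.

Section WithNonneg.
Variable mu : S -> R.
Hypothesis mu_nonneg : forall Rs : S, Rs != set0 -> 0 <= mu Rs.

Lemma massIn_ge0 Q : 0 <= massIn mu Q.
Proof. by apply: rsum_ge0 => Rs /andP [H _]; apply: mu_nonneg. Qed.

Lemma lemA m : forall T c, (#|T| <= m)%nat -> T != set0 -> Eval f mu T c ->
  exists Q c', inD f mu setT Q c' /\ c <= c'.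
Proof.
elim: m => [|m IH] T c Hm HT HE.
  by move: Hm; rewrite leqn0 cards_eq0 (negbTE HT).
case: (classic (forall S', ~ inM f mu T S' c)) => Hc.
  exists T, c; split; last lra.
  split; first exact: HT; split; first exact: subsetT; split; first exact: HE; exact: Hc.
move/not_all_ex_not: Hc => [S' /NNPP [HS'0 [HS'T HS'm]]].
have [_ [x [Hx Hxs]]] := eqz_wit HE.
have Hsplit : rsum (mem T) x = rsum (mem S') x + rsum (mem (T :\: S')) x.
  rewrite (rsum_split (mem T) (fun k => k \in S') x); congr (_ + _).
    apply: rsum_ext => // k; change ((k \in T) && (k \in S') = (k \in S')).
    case Hk: (k \in S') => /=; last by rewrite andbF.
    by rewrite (subsetP HS'T k Hk).
  apply: rsum_ext => // k; change ((k \in T) && ~~ (k \in S') = (k \in T :\: S')).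
  by rewrite inE andbC.
have HgtS : massMeet mu T S' < rsum (mem S') x.
  apply: Rnot_le_lt => Hle; apply: (HS'm (rsum (mem S') x)) => //.
    by apply: rsum_ge0 => k Hk; case: (Hx k (subsetP HS'T k Hk)).
  split => //; exists x; split; first by move=> k Hk; case: (Hx k (subsetP HS'T k Hk)).
  by split => // k Hk; case: (Hx k (subsetP HS'T k Hk)).
have Hin := massIn_split mu T S' HS'T.
have Hlt : rsum (mem (T :\: S')) x < massIn mu (T :\: S') by lra.
case: (eqVneq (T :\: S') set0) => HT''.
  by rewrite HT'' rsum_mem0 massIn0 in Hlt; lra.
have HxT'' : forall k, k \in T :\: S' -> 0 <= x k /\ f k (x k) = c.
  by move=> k; rewrite inE => /andP [_ Hk]; apply: Hx.
have [d Hd] := exist_eq f_mono f_cont HT'' HxT'' (Rlt_le _ _ Hlt).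
have Hcd : c <= d.
  have [_ [y [Hy Hys]]] := eqz_wit Hd.
  by apply: (wit_mono f_mono HT'' HxT'' Hy); rewrite Hys; lra.
have Hcard : (#|T :\: S'| <= m)%nat.
  have : T :\: S' \proper T.
    apply/properP; split; first exact: subsetDl.
    have [k Hk] := set0Pn _ HS'0.
    by exists k; [apply: (subsetP HS'T) | rewrite inE Hk].
  by move/proper_card => H; rewrite -ltnS; apply: leq_trans H Hm.
have [Q [c' [HQ Hc']]] := IH _ _ Hcard HT'' Hd.
by exists Q, c'; split => //; lra.
Qed.

Lemma single_inD k : inD f mu setT [set k] (f k (massIn mu [set k])).
Proof.
have Hne : [set k] != set0 :> S by apply/set0Pn; exists k; rewrite inE.
have Hwit : forall k0, k0 \in [set k] -> 0 <= massIn mu [set k] /\ f k0 (massIn mu [set k]) = f k (massIn mu [set k]).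
  by move=> k0; rewrite inE => /eqP ->; split => //; apply: massIn_ge0.
apply: inD_of_LH => //.
  split => //; exists (fun _ => massIn mu [set k]).
  split; first by move=> k0 /Hwit [].
  by rewrite rsum_mem1; split => // k0 /Hwit [].
apply: LH_intro => T HT0; rewrite subset1 (negbTE HT0) orbF => /eqP ->.
exists (fun _ => massIn mu [set k]); split => //.
by rewrite rsum_mem1 meetSS; lra.
Qed.

Lemma f0_le_h h : isH f mu setT h -> forall k, f k 0 <= h.
Proof.
move=> [_ Hmax] k; have := Hmax _ _ (single_inD k).
have := f_mono k 0 (massIn mu [set k]) (Rle_refl 0) (massIn_ge0 _); move=> H1 H2; exact: Rle_trans H1 H2.
Qed.

Lemma LH_union Q1 Q2 c : LH mu Q1 c -> LH mu Q2 c -> LH mu (Q1 :|: Q2) c.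
Proof.
move=> H1 H2 T HT.
have HA : T :&: Q1 \subset Q1 by apply: subsetIr.
have HB : T :\: Q1 \subset Q2.
  apply/subsetP => x; rewrite inE => /andP [Hx1 HxT]; have := subsetP HT x HxT.
  by rewrite inE (negbTE Hx1).
have [x1 [Hx1 Hs1]] := H1 _ HA.
have [x2 [Hx2 Hs2]] := H2 _ HB.
exists (fun k => if k \in Q1 then x1 k else x2 k); split.
  by move=> k Hk; case: ifP => Hq; [apply: Hx1 | apply: Hx2]; rewrite inE Hk Hq.
have -> : rsum (mem T) (fun k => if k \in Q1 then x1 k else x2 k) =
          rsum (mem (T :&: Q1)) x1 + rsum (mem (T :\: Q1)) x2.
  rewrite (rsum_split (mem T) (fun k => k \in Q1)); congr (_ + _).
    apply: rsum_ext => k.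
      by change ((k \in T) && (k \in Q1) = (k \in T :&: Q1)); rewrite inE.
    by move=> Hk; have : k \in T :&: Q1 := Hk; rewrite inE => /andP [_ ->].
  apply: rsum_ext => k.
    by change ((k \in T) && ~~ (k \in Q1) = (k \in T :\: Q1)); rewrite inE andbC.
  by move=> Hk; have : k \in T :\: Q1 := Hk; rewrite inE => /andP [/negbTE -> _].
have : massMeet mu Q1 (T :&: Q1) + massMeet mu Q2 (T :\: Q1) <= massMeet mu (Q1 :|: Q2) T.
  rewrite /massMeet (rsum_split (fun Rs : S => (Rs \subset Q1 :|: Q2) && (Rs :&: T != set0))
    (fun Rs : S => Rs \subset Q1) mu).
  apply: Rplus_le_compat.
    apply: Req_le; apply: rsum_ext => // Rs.
    case HR : (Rs \subset Q1); rewrite /= ?andbF ?andbT // meet_sub //.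
    by rewrite (subset_trans HR (subsetUl _ _)).
  apply: rsum_sub.
    move=> Rs /andP [HR2 HRm]; apply/andP; split; first (apply/andP; split).
    - by apply: subset_trans HR2 (subsetUr _ _).
    - move/meetsP: HRm => [x [Hx]]; rewrite inE => /andP [_ HxT].
      by apply/meetsP; exists x.
    - move/meetsP: HRm => [x [Hx]]; rewrite inE => /andP [HxQ _].
      by apply/negP => /subsetP /(_ x Hx); rewrite (negbTE HxQ).
  by move=> Rs /andP [/andP [_ /meet_ne0 H] _]; apply: mu_nonneg.
lra.
Qed.

Lemma LH_P h P : (forall j, j \in P <-> exists Q, inD f mu setT Q h /\ j \in Q) -> LH mu P h.
Proof.
move=> hP.
have key : forall (m : nat) (X : S), (#|X| <= m)%nat -> X \subset P ->
    exists Q, X \subset Q /\ Q \subset P /\ LH mu Q h.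
  elim => [|m IH] X Hm HX.
    exists set0; split; last by split; [exact: sub0set | exact: LH_set0].
    by move: Hm; rewrite leqn0 cards_eq0 => /eqP ->.
  case: (eqVneq X set0) => [->|HX0].
    by exists set0; split; [exact: sub0set | split; [exact: sub0set | exact: LH_set0]].
  have [j Hj] := set0Pn _ HX0.
  have Hcard : (#|X :\ j| <= m)%nat by move: Hm; rewrite (cardsD1 j X) Hj add1n ltnS.
  have [Q' [HXQ' [HQ'P HQ']]] := IH _ Hcard (subset_trans (subD1set X j) HX).
  have [S0 [HS0 HjS0]] := (hP j).1 (subsetP HX j Hj).
  have HS0P : S0 \subset P by apply/subsetP => y Hy; apply/(hP y).2; exists S0.
  exists (Q' :|: S0); split; last split.
  - apply/subsetP => y Hy; rewrite inE; case: (eqVneq y j) => [->|Hne]; first by rewrite HjS0 orbT.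
    by rewrite (subsetP HXQ') // !inE Hne Hy.
  - by rewrite subUset HQ'P HS0P.
  - by apply: LH_union => //; exact: LH_of_inD HS0.
have [Q [HPQ [HQP HQ]]] := key #|P| P (leqnn _) (subxx _).
suff -> : P = Q by [].
by apply/eqP; rewrite eqEsubset HPQ HQP.
Qed.

End WithNonneg.

End Main.
Arguments LH {n}.
Arguments meet_sub {n}.
Arguments meet_ne0 {n}.
Arguments massIn0 {n}.
Arguments rsum_mem0 {n}.
Arguments rsum_mem1 {n}.
Arguments meetSS {n}.


Lemma part_sum (T : finType) (F : T -> R) (q : pred T) (g : T -> T) (pp : pred T) :
  rsum pp (fun R' => rsum (fun Rs => q Rs && (g Rs == R')) F) = rsum (fun Rs => q Rs && pp (g Rs)) F.
Proof.
rewrite /rsum [RHS](partition_big g pp); last by move=> i /andP [].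
apply: eq_bigr => j Hj; apply: eq_bigl => i; rewrite !unfold_in /=.
case E: (g i == j); rewrite ?andbF ?andbT //.
by move/eqP: E => E; rewrite E; rewrite unfold_in in Hj; rewrite Hj andbT.
Qed.

Theorem mainTheorem15 (n : nat) (f : 'I_n -> R -> R) (mu : {set 'I_n} -> R)
  (f_mono : forall j, nondecr0 (f j))
  (f_cont : forall j, cont0 (f j))
  (mu_nonneg : forall Rs : {set 'I_n}, Rs != set0 -> 0 <= mu Rs)
  (h : R) (P : {set 'I_n})
  (hH : isH f mu setT h) (hP : isP f mu setT h P) :
  (exists s : {set 'I_n} -> 'I_n -> R,
     consProfile mu P s /\ forall j, j \in P -> f j (load P s j) = h) /\
  (P != setT -> forall h', isH f (removeMass mu P) (~: P) h' -> h > h').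
Proof.
have F1 := @f0_le_h n f f_mono mu mu_nonneg h hH.
have HLP := @LH_P n f mu mu_nonneg h P hP.
have Hmax : forall Q c, inD f mu setT Q c -> c <= h by case: hH.
have LemA' : forall T c, T != set0 -> Eval f mu T c -> c <= h.
  move=> T c HT HE.
  have [Q [c' [HQ Hc']]] := @lemA n f f_mono f_cont mu #|T| T c (leqnn _) HT HE.
  have := Hmax _ _ HQ; lra.
pose M := massIn mu P.
have HM0 : 0 <= M by apply: massIn_ge0.
have : forall k, exists p : R * R,
    (k \in P -> 0 <= p.1 /\ p.1 <= p.2 /\ f k p.1 = h /\ f k p.2 = h /\
      (forall w, 0 <= w -> w < p.1 -> f k w < h) /\
      (p.1 + M <= p.2 \/ forall z, 0 <= z -> f k z <= h -> z <= p.2)) /\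
    (k \notin P -> p.1 = 0 /\ p.2 = 0).
  move=> k; case: (boolP (k \in P)) => Hk; last by exists (0, 0).
  have [x [Hx _]] := HLP [set k] ltac:(by rewrite sub1set).
  have [Hx0 Hxe] := Hx k (set11 k).
  have [lo [Hlo0 [Hlox [Hloe Hlow]]]] :=
    minpt (f_mono k) (f_cont k) Hx0 (F1 k) ltac:(rewrite Hxe; lra).
  have [H [HloH [HHe HHm]]] := hipt (f_mono k) (f_cont k) Hlo0 Hloe HM0.
  by exists (lo, H); split => // _.
case/fin_all_exists => p Hp.
pose lo := fun k => (p k).1.
pose hi := fun k => (p k).2.
have Hlohi : forall k, lo k <= hi k.
  move=> k; case: (boolP (k \in P)) => Hk.
    by have [/(_ Hk) [_ [? _]] _] := Hp k; rewrite /lo /hi.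
  by have [_ /(_ Hk) [HH1 HH2]] := Hp k; rewrite /lo /hi HH1 HH2; lra.
have Hlo0 : forall k, 0 <= lo k.
  move=> k; case: (boolP (k \in P)) => Hk.
    by have [/(_ Hk) [? _] _] := Hp k; rewrite /lo.
  by have [_ /(_ Hk) [HH1 HH2]] := Hp k; rewrite /lo HH1; lra.
have Hhi0 : forall k, 0 <= hi k by move=> k; have := Hlo0 k; have := Hlohi k; lra.
have Hlo_min : forall k, k \in P -> forall z, 0 <= z -> f k z = h -> lo k <= z.
  move=> k Hk z Hz Hfz; have [/(_ Hk) [_ [_ [_ [_ [Hw _]]]]] _] := Hp k.
  by apply: Rnot_lt_le => Hlt; have := Hw z Hz Hlt; lra.
have Hsand : forall k, k \in P -> forall z, lo k <= z -> z <= hi k -> f k z = h.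
  move=> k Hk z H1 H2; have [/(_ Hk) [Hl0 [_ [Hle [Hhe _]]]] _] := Hp k.
  have := f_mono k _ _ Hl0 H1; have := f_mono k z (hi k) ltac:(rewrite /lo in H1; lra) H2.
  rewrite /lo /hi in H1 H2 *; lra.
have Hout : forall k, k \notin P -> lo k = 0 /\ hi k = 0 by move=> k Hk; case: (Hp k) => _ /(_ Hk).
have lsumP : forall (l : 'I_n -> R), (forall k, k \notin P -> l k = 0) ->
    forall T : {set 'I_n}, lsum l T = lsum l (T :&: P).
  move=> l Hl T; rewrite !lsumE; apply: rsum_ext => // k _; rewrite inE.
  by case: (k \in T); case HkP: (k \in P) => //=; rewrite Hl ?HkP.
have Hupper : forall T' : {set 'I_n}, T' \subset P -> massIn mu T' <= lsum hi T'.
  move=> T' HT'.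
  case: (eqVneq T' set0) => [->|HT0]; first by rewrite massIn0 /lsum rsum_mem0; lra.
  case: (classic (exists k, k \in T' /\ lo k + M <= hi k)) => [[k [Hk Hkb]]|Hno].
    have H1 : massIn mu T' <= M.
      apply: rsum_sub; last by move=> Rs /andP [H _]; apply: mu_nonneg.
      by move=> Rs /andP [H1 H2]; rewrite H1 (subset_trans H2 HT').
    have H2 : hi k <= lsum hi T' by apply: rsum_term => // j _; apply: Hhi0.
    have := Hlo0 k; lra.
  have Hmaxp : forall k, k \in T' -> forall z, 0 <= z -> f k z <= h -> z <= hi k.
    move=> k Hk; have [/(_ (subsetP HT' k Hk)) [_ [_ [_ [_ [_ [Hb|Hb]]]]]] _] := Hp k => //.
    by exfalso; apply: Hno; exists k.
  apply: Rnot_lt_le => Hlt.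
  case: (Rle_lt_dec (lsum lo T') (massIn mu T')) => Hlo.
    have Hwit : forall k, k \in T' -> 0 <= lo k /\ f k (lo k) = h.
      move=> k Hk; split; first exact: Hlo0.
      by have [/(_ (subsetP HT' k Hk)) [_ [_ [? _]]] _] := Hp k.
    have [d Hd] := exist_eq f_mono f_cont HT0 Hwit Hlo.
    have Hdh : d <= h := LemA' _ _ HT0 Hd.
    have [_ [y [Hy Hys]]] := eqz_wit Hd.
    have Hhd : h <= d by apply: (wit_mono f_mono HT0 Hwit Hy); rewrite Hys.
    have : rsum (mem T') y <= lsum hi T'.
      apply: rsum_le => k Hk; have [Hy0 Hye] := Hy k Hk.
      by apply: Hmaxp => //; lra.
    lra.
  have : lsum lo T' <= lsum hi T' by apply: rsum_le => k _; apply: Hlohi.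
  lra.
pose a := fun Rs : {set 'I_n} => if (Rs != set0) && (Rs \subset P) then mu Rs else 0.
have Ha : forall Rs, 0 <= a Rs.
  by move=> Rs; rewrite /a; case: ifP => [/andP [H _]|_]; [apply: mu_nonneg | lra].
have HLow : forall T : {set 'I_n}, lsum lo T <= cov (fun Rs => Rs) a T.
  move=> T; rewrite (lsumP lo (fun k Hk => proj1 (Hout k Hk))).
  have [y [Hy Hys]] := HLP (T :&: P) (subsetIr _ _).
  have -> : cov (fun Rs => Rs) a T = massMeet mu P (T :&: P).
    rewrite /cov /massMeet (rsum_mkcond _ a) (rsum_mkcond _ mu); apply: rsum_ext => // Rs _; rewrite /a.
    case HR: (Rs \subset P); rewrite /= ?andbF ?andbT.
      rewrite meet_sub //; case HRm: (Rs :&: T != set0) => //.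
      by rewrite (meet_ne0 _ _ HRm).
    by case: ifP.
  apply: Rle_trans Hys; apply: rsum_le => k Hk.
  have Hk' : k \in T :&: P := Hk.
  have [Hy0 Hye] := Hy k Hk'.
  by apply: Hlo_min => //; move: Hk'; rewrite inE => /andP [].
have HUp : forall T : {set 'I_n}, inn (fun Rs => Rs) a T <= lsum hi T.
  move=> T; rewrite (lsumP hi (fun k Hk => proj2 (Hout k Hk))).
  have -> : inn (fun Rs => Rs) a T = massIn mu (T :&: P).
    rewrite /inn /massIn (rsum_mkcond _ a) (rsum_mkcond _ mu); apply: rsum_ext => // Rs _; rewrite /a.
    by rewrite subsetI; case: (Rs \subset T); case: (Rs != set0); case: (Rs \subset P).
  by apply: Hupper; apply: subsetIr.
have [x [Hx1 [Hx2 [Hx3 Hx4]]]] :=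
  @flow_main n _ {set 'I_n} (fun Rs => Rs) a lo hi (leqnn _) Ha Hlohi HLow HUp.
have Hsplit : forall Rs, rsum predT (x Rs) = rsum (mem Rs) (x Rs).
  move=> Rs; rewrite (rsum_split predT (mem Rs) (x Rs)).
  rewrite [X in _ + X]rsum_eq0; last first.
    by move=> j /andP [_ Hj]; apply: Hx2.
  rewrite Rplus_0_r; apply: rsum_ext => //.
have Hzero : forall Rs j, ~~ ((Rs != set0) && (Rs \subset P)) -> x Rs j = 0.
  move=> Rs j HR; have := Hx3 Rs; rewrite /a (negbTE HR) => Hs.
  have := @rsum_term _ predT (x Rs) j isT (fun i _ => Hx1 Rs i).
  have := Hx1 Rs j; lra.
split.
  exists x; split.
    move=> Rs HR0 HRP; split; first exact: Hx1.
    split; first exact: Hx2.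
    by rewrite -Hsplit Hx3 /a HR0 HRP.
  move=> j Hj; apply: Hsand => //.
    have [H _] := Hx4 j; apply: Rle_trans H _; apply: Req_le.
    rewrite /load (rsum_split predT (fun Rs : {set 'I_n} => (Rs != set0) && (Rs \subset P))).
    rewrite [X in _ + X]rsum_eq0; first by rewrite Rplus_0_r.
    by move=> Rs /andP [_ HR]; apply: Hzero.
  have [_ H] := Hx4 j; apply: Rle_trans _ H; apply: Req_le.
  rewrite /load (rsum_split predT (fun Rs : {set 'I_n} => (Rs != set0) && (Rs \subset P))).
  rewrite [X in _ + X]rsum_eq0; first by rewrite Rplus_0_r.
  by move=> Rs /andP [_ HR]; apply: Hzero.
move=> HPT h' [[S' HS'] _].
apply: Rnot_le_lt => Hle.
have [HS'0 [HS'U _]] := HS'.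
have HLS' := @LH_of_inD n f _ _ _ _ HS'.
pose Q := S' :|: P.
have HLQ : LH f mu Q h.
  move=> T HT.
  have HA : T :&: P \subset P by apply: subsetIr.
  have HB : T :\: P \subset S'.
    apply/subsetP => z; rewrite inE => /andP [Hz1 HzT]; have := subsetP HT z HzT.
    by rewrite inE (negbTE Hz1) orbF.
  have [x1 [Hx1' Hs1]] := HLP _ HA.
  have [x2 [Hx2' Hs2]] := HLS' _ HB.
  have : forall k, exists y, k \in T :\: P -> 0 <= y /\ y <= x2 k /\ f k y = h.
    move=> k; case: (boolP (k \in T :\: P)) => Hk; last by exists 0.
    have [Hx20 Hx2e] := Hx2' k Hk.
    have [y [Hy0 [Hyx [Hye _]]]] := minpt (f_mono k) (f_cont k) Hx20 (F1 k) ltac:(rewrite Hx2e; lra).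
    by exists y.
  case/fin_all_exists => y Hy.
  exists (fun k => if k \in P then x1 k else y k); split.
    move=> k Hk; case: ifP => Hq.
      by apply: Hx1'; rewrite inE Hk Hq.
    have Hk' : k \in T :\: P by rewrite inE Hk Hq.
    by have [? [_ ?]] := Hy k Hk'.
  have -> : rsum (mem T) (fun k => if k \in P then x1 k else y k) =
            rsum (mem (T :&: P)) x1 + rsum (mem (T :\: P)) y.
    rewrite (rsum_split (mem T) (fun k => k \in P)); congr (_ + _).
      apply: rsum_ext => k.
        by change ((k \in T) && (k \in P) = (k \in T :&: P)); rewrite inE.
      by move=> Hk; have : k \in T :&: P := Hk; rewrite inE => /andP [_ ->].
    apply: rsum_ext => k.
      by change ((k \in T) && ~~ (k \in P) = (k \in T :\: P)); rewrite inE andbC.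
    by move=> Hk; have : k \in T :\: P := Hk; rewrite inE => /andP [/negbTE -> _].
  have Hy2 : rsum (mem (T :\: P)) y <= rsum (mem (T :\: P)) x2.
    by apply: rsum_le => k Hk; have [_ [? _]] := Hy k Hk.
  suff : massMeet mu P (T :&: P) + massMeet (removeMass mu P) S' (T :\: P) <= massMeet mu Q T.
    lra.
  rewrite /massMeet /removeMass part_sum.
  rewrite (rsum_split (fun Rs : {set 'I_n} => (Rs \subset Q) && (Rs :&: T != set0))
    (fun Rs : {set 'I_n} => Rs \subset P) mu).
  apply: Rplus_le_compat.
    apply: Req_le; apply: rsum_ext => // Rs.
    case HR : (Rs \subset P); rewrite /= ?andbF ?andbT // meet_sub //.
    by rewrite (subset_trans HR (subsetUr _ _)).
  apply: rsum_sub.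
    move=> Rs /andP [HR0 /andP [HRS HRm]].
    move/meetsP: HRm => [z [Hz1 Hz2]].
    move: Hz1 Hz2; rewrite !inE => /andP [HzP HzR] /andP [_ HzT].
    apply/andP; split; first (apply/andP; split).
    - apply/subsetP => w Hw; rewrite inE; case HwP: (w \in P); first by rewrite orbT.
      by rewrite (subsetP HRS) // inE HwP Hw.
    - by apply/meetsP; exists z.
    - by apply/negP => /subsetP /(_ z HzR); rewrite (negbTE HzP).
  by move=> Rs /andP [/andP [_ /meet_ne0 H] _]; apply: mu_nonneg.
have HQ0 : Q != set0.
  have [j Hj] := set0Pn _ HS'0; apply/set0Pn; exists j; by rewrite inE Hj.
have [xq [Hxq Hxqs]] := HLQ Q (subxx _).
rewrite meetSS in Hxqs.
have [d Hd] := exist_eq f_mono f_cont HQ0 Hxq Hxqs.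
have Hdh : d <= h := LemA' _ _ HQ0 Hd.
have [_ [y [Hy Hys]]] := eqz_wit Hd.
have Hhd : h <= d by apply: (wit_mono f_mono HQ0 Hxq Hy); rewrite Hys.
have Hdh' : d = h by lra.
rewrite Hdh' in Hd.
have HDQ : inD f mu setT Q h by apply: inD_of_LH.
have [j Hj] := set0Pn _ HS'0.
have HjP : j \in P by apply/(hP j).2; exists Q; split => //; rewrite inE Hj.
by move: (subsetP HS'U j Hj); rewrite inE HjP.
Qed.
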